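(* Let $G$ be a simple connected graph with $n\ge 3$ vertices and $m$ edges, and let $c=m-n+1$. If $c\le (n-1)/2$, then $$\rho_{ABC}(G)\le \sqrt{n-2+\frac{2c}{n-1}}.$$
   Context: For a simple connected graph $G$ with vertex set $\{v_1,\dots,v_n\}$ and degrees $d_i$, the ABC matrix is $M(G)=(m_{ij})_{n\times n}$ with $m_{ij}=\sqrt{(d_i+d_j-2)/(d_id_j)}$ if $v_iv_j$ is an edge and $m_{ij}=0$ otherwise. The ABC spectral radius $\rho_{ABC}(G)$ is the largest eigenvalue of $M(G)$. A connected graph with $n$ vertices and $m$ edges is called $c$-cyclic where $c=m-n+1$. *)

(* Defs.v *)
From mathcomp Require Import all_boot all_order all_algebra.
From mathcomp Require Import reals.
Set Implicit Arguments. Unset Strict Implicit. Unset Printing Implicit Defensive.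
Import Order.TTheory GRing.Theory Num.Theory.
Local Open Scope ring_scope.

Definition simple_graph (T : finType) (e : rel T) : Prop :=
  symmetric e /\ irreflexive e.

Definition connected_graph (T : finType) (e : rel T) : Prop :=
  forall x y : T, connect e x y.

Definition deg (T : finType) (e : rel T) (v : T) : nat := #|[set u | e v u]|.

Definition edge_set (T : finType) (e : rel T) : {set {set T}} :=
  [set E : {set T} | [exists x, exists y, (E == [set x; y]) && e x y]].
Definition nedges (T : finType) (e : rel T) : nat := #|edge_set e|.

Definition cyclomatic (R : realType) (T : finType) (e : rel T) : R :=
  (nedges e)%:R - #|T|%:R + 1.

Definition abc_matrix (R : realType) (T : finType) (e : rel T)
  : 'M[R]_#|T| :=
  \matrix_(i, j)
    (if e (enum_val i) (enum_val j) then
       Num.sqrt (((deg e (enum_val i))%:R + (deg e (enum_val j))%:R - 2)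
                 / ((deg e (enum_val i))%:R * (deg e (enum_val j))%:R))
     else 0).

(* Main.v *)
Require Import Defs.
From mathcomp Require Import all_boot all_order all_algebra.
From mathcomp Require Import reals ring lra.
Import Order.TTheory GRing.Theory Num.Theory.
Local Open Scope ring_scope.

Lemma deg_sumR (R : realFieldType) (T : finType) (e : rel T) t :
  (deg e t)%:R = \sum_(s | e t s) (1 : R).
Proof.
have -> : \sum_(s | e t s) (1:R) = \sum_(s in [set u | e t u]) 1.
  by apply: eq_bigl => s; rewrite inE.
by rewrite sumr_const.
Qed.

Lemma card_sumR (R : realFieldType) (T : finType) :
  (#|T|%:R : R) = \sum_(s : T) (1 : R).
Proof. by rewrite sumr_const. Qed.

Lemma deg_gt0 (T : finType) (e : rel T) t :
  connected_graph e -> (2 <= #|T|)%N -> (0 < deg e t)%N.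
Proof.
move=> con cT.
have [y yt] : exists y, y != t.
  have : (0 < #|predC1 t|)%N by rewrite cardC1; case: #|T| cT => // -[].
  by case/card_gt0P => y; rewrite inE => yt; exists y.
have /connectP [p pth ylast] := con t y.
case: p pth ylast => [|z p] /=; first by move=> _ yt'; rewrite yt' eqxx in yt.
case/andP => etz _ _; apply/card_gt0P; exists z; by rewrite inE.
Qed.

Lemma pair_set_eq (T : finType) (e : rel T) (a b x y : T) :
  simple_graph e -> e x y ->
  (e a b && ([set a; b] == [set x; y])) = ((a, b) \in [set (x, y); (y, x)]).
Proof.
case=> sym irr exy.
have xy : x != y by apply: contraTneq exy => ->; rewrite irr.
rewrite !inE !xpair_eqE.
apply/idP/idP.
- case/andP=> eab /eqP Hs.
  have ab : a != b by apply: contraTneq eab => ->; rewrite irr.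
  have : a \in [set x; y] by rewrite -Hs set21.
  have : b \in [set x; y] by rewrite -Hs set22.
  move=> /set2P hb /set2P ha.
  case: ha hb ab => -> [] -> ab.
  + by rewrite (eqxx x) in ab.
  + by rewrite (eqxx x) (eqxx y).
  + by rewrite (eqxx x) (eqxx y) orbT.
  + by rewrite (eqxx y) in ab.
- case/orP=> /andP[/eqP-> /eqP->]; first by rewrite exy eqxx.
  by rewrite sym exy setUC eqxx.
Qed.

Lemma handshake (T : finType) (e : rel T) :
  simple_graph e -> (\sum_(t : T) deg e t = 2 * nedges e)%N.
Proof.
move=> sg.
have -> : (\sum_(t : T) deg e t = \sum_(q : T * T | e q.1 q.2) 1)%N.
  rewrite (eq_bigr (fun t => \sum_(u : T) (if e t u then 1 else 0))%N); last first.
    move=> t _; rewrite /deg -sum1_card big_mkcond /=.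
    by apply: eq_bigr => u _; rewrite inE.
  by rewrite pair_big /= [RHS]big_mkcond.
rewrite (partition_big (fun q : T * T => [set q.1; q.2]) (mem (edge_set e))) /=; last first.
  move=> [a b] /= eab; rewrite /edge_set inE; apply/existsP; exists a; apply/existsP; exists b.
  by rewrite eqxx eab.
rewrite /nedges -sum1_card mulnC big_distrl /=.
apply: eq_bigr => E; rewrite /edge_set inE => /existsP [x /existsP [y /andP [/eqP -> exy]]].
rewrite mul1n.
rewrite (eq_bigl (fun q : T * T => q \in [set (x, y); (y, x)])); last first.
  by move=> [a b] /=; rewrite pair_set_eq.
rewrite sum1_card cards2.
case: sg => _ irr.
have xy : x != y by apply: contraTneq exy => ->; rewrite irr.
by rewrite xpair_eqE negb_and xy.
Qed.

Lemma deg_ge1 (R : realFieldType) (T : finType) (e : rel T) t :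
  connected_graph e -> (2 <= #|T|)%N -> 1 <= (deg e t)%:R :> R.
Proof. by move=> con cT; rewrite ler1n; apply: deg_gt0. Qed.

Lemma nsplit (R : realFieldType) (T : finType) (e : rel T) t :
  (#|T|%:R : R) = (deg e t)%:R + \sum_(s | ~~ e t s) 1.
Proof. by rewrite card_sumR (bigID (e t)) /= deg_sumR. Qed.

Lemma nonnb_ge1 (R : realFieldType) (T : finType) (e : rel T) t :
  simple_graph e -> 1 <= \sum_(s | ~~ e t s) (1 : R).
Proof.
case=> _ irr; rewrite (bigD1 t) /=; last by rewrite irr.
by rewrite lerDl; apply: sumr_ge0 => *; apply: ler01.
Qed.

Lemma deg_leN (R : realFieldType) (T : finType) (e : rel T) t :
  simple_graph e -> (deg e t)%:R <= #|T|%:R - 1 :> R.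
Proof.
move=> sg; have := nonnb_ge1 R _ e t sg; rewrite (nsplit R _ e t); lra.
Qed.

Lemma S_leK (R : realFieldType) (T : finType) (e : rel T) t :
  simple_graph e -> connected_graph e -> (2 <= #|T|)%N ->
  \sum_(s | e t s) (deg e s)%:R <= 2 * (nedges e)%:R - #|T|%:R + 1 :> R.
Proof.
move=> sg con cT.
have hs : \sum_(s : T) (deg e s)%:R = 2 * (nedges e)%:R :> R.
  by rewrite -natr_sum handshake // natrM.
rewrite (bigID (e t)) /= in hs.
have ns := nsplit R _ e t.
have h1 : \sum_(s | ~~ e t s) (deg e s)%:R =
          \sum_(s | ~~ e t s) ((deg e s)%:R - 1) + \sum_(s | ~~ e t s) (1 : R).
  by rewrite -big_split /=; apply: eq_bigr => s _; rewrite subrK.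
have h2 : (deg e t)%:R - 1 <= \sum_(s | ~~ e t s) ((deg e s)%:R - 1 : R).
  case: (sg) => _ irr; rewrite (bigD1 t) /=; last by rewrite irr.
  rewrite lerDl; apply: sumr_ge0 => s _; rewrite subr_ge0; exact: deg_ge1.
lra.
Qed.

Lemma S_leDN (R : realFieldType) (T : finType) (e : rel T) t :
  simple_graph e ->
  \sum_(s | e t s) (deg e s)%:R <= (deg e t)%:R * (#|T|%:R - 1) :> R.
Proof.
move=> sg; rewrite deg_sumR mulr_suml; apply: ler_sum => s _.
by rewrite mul1r; apply: deg_leN.
Qed.
Lemma wCS (R : realFieldType) (I : finType) (P : pred I) (p y w : I -> R) :
  (forall i, P i -> 0 < w i) ->
  (\sum_(i | P i) p i * y i) ^+ 2 <=
  (\sum_(i | P i) p i ^+ 2 / w i) * (\sum_(i | P i) w i * y i ^+ 2).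
Proof.
move=> wpos.
set A := \sum_(i | P i) p i ^+ 2 / w i.
set C := \sum_(i | P i) w i * y i ^+ 2.
set Sm := \sum_(i | P i) p i * y i.
have A0 : 0 <= A by apply: sumr_ge0 => i Pi; apply: divr_ge0; [exact: sqr_ge0 | exact: ltW (wpos i Pi)].
have C0 : 0 <= C by apply: sumr_ge0 => i Pi; apply: mulr_ge0; [exact: ltW (wpos i Pi) | exact: sqr_ge0].
have [A00|Apos] := eqVneq A 0.
  have p0 : forall i, P i -> p i = 0.
    move=> i Pi; have /psumr_eq0P H := A00.
    have := H (fun i Pi => divr_ge0 (sqr_ge0 (p i)) (ltW (wpos i Pi))) i Pi.
    move/eqP; rewrite mulf_eq0 invr_eq0 sqrf_eq0 (gt_eqF (wpos i Pi)) orbF.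
    by move/eqP.
  have -> : Sm = 0 by rewrite /Sm big1 // => i Pi; rewrite p0 // mul0r.
  by rewrite expr0n /= mulr_ge0.
have Apos' : 0 < A by rewrite lt_def Apos A0.
have key : 0 <= \sum_(i | P i) w i * (A * y i - Sm * p i / w i) ^+ 2.
  apply: sumr_ge0 => i Pi; apply: mulr_ge0; [exact: ltW (wpos i Pi) | exact: sqr_ge0].
have E : \sum_(i | P i) w i * (A * y i - Sm * p i / w i) ^+ 2 =
   A ^+ 2 * C - 2 * A * Sm * Sm + Sm ^+ 2 * A.
  have E1 : A ^+ 2 * C = \sum_(i | P i) A ^+ 2 * (w i * y i ^+ 2) by rewrite mulr_sumr.
  have E2 : 2 * A * Sm * Sm = \sum_(i | P i) 2 * A * Sm * (p i * y i) by rewrite -mulr_sumr.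
  have E3 : Sm ^+ 2 * A = \sum_(i | P i) Sm ^+ 2 * (p i ^+ 2 / w i) by rewrite mulr_sumr.
  rewrite E1 E2 E3 -sumrN -!big_split /=.
  apply: eq_bigr => i Pi.
  have wn0 : w i != 0 by rewrite gt_eqF // wpos.
  by field.
rewrite E in key.
nra.
Qed.
Lemma final_ineq (R : realFieldType) (N D S K : R) :
  2 <= N -> 1 <= D -> D <= N -> (D = 1 \/ 2 <= D) -> S <= K -> S <= D * N ->
  K <= 2 * N -> S / D + D - 2 <= N - 2 + K / N.
Proof.
move=> N2 D1 DN hD SK SDN K2N.
have Nn0 : N != 0 by apply/eqP => N0; rewrite N0 in N2; lra.
have Dn0 : D != 0 by apply/eqP => D0; rewrite D0 in D1; lra.
set q := K / N; set r := S / D.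
have hK : K = q * N by rewrite /q divfK.
have hS : S = r * D by rewrite /r divfK.
case: hD => [D1'|D2].
  rewrite hS D1' mulr1 in SDN SK *.
  rewrite hK in SK.
  have Npos : 0 < N by lra.
  have h1 : r / N <= q by rewrite ler_pdivrMr //.
  have h2 : r <= N - 1 + r / N.
    have -> : N - 1 + r / N = ((N - 1) * N + r) / N by field.
    rewrite ler_pdivlMr //; nra.
  lra.
have Npos : 0 < N by lra.
have Dpos : 0 < D by lra.
have h1 : 0 <= (N - D) * (N * D - K) by apply: mulr_ge0; nra.
have h2 : N * D ^+ 2 + S * N <= N ^+ 2 * D + K * D by nra.
rewrite hS hK in h2.
have h3 : (N * D) * (r + D) <= (N * D) * (N + q) by nra.
have ND : 0 < N * D by apply: mulr_gt0.
rewrite ler_pM2l // in h3.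
lra.
Qed.

Theorem corollary2p2 (R : realType) (T : finType) (e : rel T) :
  simple_graph e -> connected_graph e -> (3 <= #|T|)%N ->
  cyclomatic R e <= (#|T|%:R - 1) / 2 ->
  forall lambda : R, eigenvalue (abc_matrix R e) lambda ->
    lambda <= Num.sqrt (#|T|%:R - 2 + 2 * cyclomatic R e / (#|T|%:R - 1)).
Proof.
move=> sg con n3 hc lam /eigenvalueP [v hv vn0].
have n2 : (2 <= #|T|)%N by apply: ltnW.
have sym : symmetric e by case: sg.
pose d t : R := (deg e t)%:R.
have d1 : forall t, 1 <= d t by move=> t; apply: deg_ge1.
pose mm s t : R := if e s t then Num.sqrt ((d s + d t - 2) / (d s * d t)) else 0.
pose x : T -> R := fun t => v 0 (enum_rank t).
have eig : forall t, lam * x t = \sum_(s : T) x s * mm s t.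
  move=> t; have := congr1 (fun M : 'rV[R]_#|T| => M 0 (enum_rank t)) hv.
  rewrite /= !mxE => <-.
  rewrite [RHS](eq_bigl (fun s => s \in T)) // (big_enum_val (fun s => x s * mm s t)) /=.
  apply: eq_bigr => i _; rewrite !mxE enum_rankK /x enum_valK //.
have Xpos : 0 < \sum_(t : T) x t ^+ 2.
  case: (pickP (fun i => v 0 i != 0)) => [i vi | none]; last first.
    case/eqP: vn0; apply/rowP => i; rewrite !mxE.
    by have := none i => /= /negbFE/eqP.
  rewrite (bigD1 (enum_val i)) //= /x enum_valK.
  have h1 : 0 < v 0 i ^+ 2 by rewrite lt_def sqr_ge0 sqrf_eq0 vi.
  have h2 : 0 <= \sum_(t | t != enum_val i) v 0 (enum_rank t) ^+ 2.
    by apply: sumr_ge0 => *; apply: sqr_ge0.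
  lra.
pose N : R := #|T|%:R - 1.
pose K : R := 2 * (nedges e)%:R - #|T|%:R + 1.
pose B : R := N - 2 + K / N.
have N2 : 2 <= N.
  have : 3%:R <= #|T|%:R :> R by rewrite ler_nat.
  rewrite /N; lra.
have K2N : K <= 2 * N.
  move: hc; rewrite /cyclomatic /K /N; lra.
have fB : forall t, (\sum_(s | e t s) d s) / d t + d t - 2 <= B.
  move=> t; apply: final_ineq => //.
  - exact: deg_leN.
  - rewrite /d; have := deg_gt0 T e t con n2.
    case: (deg e t) => [|[|k]] // _; [by left | right].
    by rewrite ler_nat.
  - exact: S_leK.
  - exact: S_leDN.
have dpos : forall t, 0 < d t by move=> t; apply: lt_le_trans (d1 t); apply: ltr01.
have pv : forall t, (lam * x t) ^+ 2 <= B * \sum_(s | e t s) (d s)^-1 * x s ^+ 2.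
  move=> t; rewrite eig.
  have -> : \sum_(s : T) x s * mm s t = \sum_(s | e t s) mm t s * x s.
    rewrite [RHS]big_mkcond /=; apply: eq_bigr => s _.
    rewrite /mm sym; case: ifP => ets; last by rewrite mulr0.
    by rewrite mulrC (addrC (d s)) (mulrC (d s)).
  apply: le_trans (@wCS R T (e t) (mm t) x (fun s => (d s)^-1) _) _.
    by move=> s _; rewrite invr_gt0.
  apply: ler_wpM2r; first by apply: sumr_ge0 => s _; apply: mulr_ge0; [rewrite invr_ge0 ltW | apply: sqr_ge0].
  apply: le_trans (fB t).
  have -> : \sum_(s | e t s) mm t s ^+ 2 / (d s)^-1 =
            \sum_(s | e t s) (d s * (d t)^-1 + (d t - 2) / d t * 1).
    apply: eq_bigr => s ets; rewrite /mm ets sqr_sqrtr; last first.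
      apply: divr_ge0; last by apply: mulr_ge0; apply: ltW.
      have := d1 s; have := d1 t; lra.
    have := dpos s; have := dpos t; rewrite !lt0r => /andP [dt0 _] /andP [ds0 _].
    by field; rewrite dt0 ds0.
  rewrite big_split /= -mulr_suml -mulr_sumr -deg_sumR -/(d t).
  have := dpos t; rewrite lt0r => /andP [dt0 _].
  by rewrite le_eqVlt; apply/orP; left; apply/eqP; field.
have exch : \sum_(t : T) \sum_(s | e t s) (d s)^-1 * x s ^+ 2 = \sum_(t : T) x t ^+ 2.
  rewrite (exchange_big_dep predT) //=; apply: eq_bigr => s _.
  have -> : \sum_(t | true && e t s) (d s)^-1 * x s ^+ 2 = (d s)^-1 * x s ^+ 2 * d s.
    rewrite {3}/d deg_sumR mulr_sumr; apply: eq_big => [t|t _]; [by rewrite sym | by rewrite mulr1].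
  have := lt0r_neq0 (dpos s) => ds0; by field.
have hl : lam ^+ 2 * \sum_(t : T) x t ^+ 2 <= B * \sum_(t : T) x t ^+ 2.
  have -> : lam ^+ 2 * \sum_(t : T) x t ^+ 2 = \sum_(t : T) (lam * x t) ^+ 2.
    by rewrite mulr_sumr; apply: eq_bigr => t _; rewrite exprMn.
  rewrite -[in X in _ <= X]exch mulr_sumr; apply: ler_sum => t _; exact: pv.
rewrite ler_pM2r // in hl.
have eqB : #|T|%:R - 2 + 2 * cyclomatic R e / (#|T|%:R - 1) = B.
  rewrite /B /N /K /cyclomatic.
  have : #|T|%:R - 1 != 0 :> R by rewrite /N in N2; apply/eqP => h; rewrite h in N2; lra.
  by move=> h; field.
rewrite eqB.
case: (lerP lam 0) => [l0 | lpos]; first exact: le_trans l0 (sqrtr_ge0 _).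
rewrite -(ger0_norm (ltW lpos)) -sqrtr_sqr ler_sqrt //.
exact: le_trans (sqr_ge0 lam) hl.
Qed.
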